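(* Let $G=(V,R,E)$ be a finite bipartite version–record graph, let $\mathbb{T}=(V,\mathbb{E})$ be a version tree on $V$ satisfying the standing assumptions below, and let $\delta>0$. Let $e^*=(v_i,v_j)\in\mathbb{E}$ be an edge with $w(v_i,v_j)\le\delta|R|$ (an edge that LyreSplit may split). Removing $e^*$ splits $\mathbb{T}$ into two subtrees with version sets $V_1,V_2$; let $R_1=\bigcup_{v\in V_1}R(v)$ and $R_2=\bigcup_{v\in V_2}R(v)$. Then the storage cost after splitting satisfies $\mathcal{S}=|R_1|+|R_2|\le(1+\delta)|R|$.
   Context: $(v,r)\in E$ means version $v$ contains record $r$; $R(v)=\{r:(v,r)\in E\}$ and $R=\bigcup_{v\in V}R(v)$. The version tree $\mathbb{T}$ is a rooted tree on $V$ whose edges go from parent to child version, with weight $w(v_i,v_j)=|R(v_i)\cap R(v_j)|$. Standing assumption (no cross-version diff rule): for every record $r$, the set of versions containing $r$ is a connected subtree of $\mathbb{T}$. The storage cost of a partitioning of $V$ into blocks is the sum over blocks of the number of distinct records contained in versions of that block. *)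

(* Defs.v *)
From HB Require Import structures.
From mathcomp Require Import all_boot all_order all_algebra.
Set Implicit Arguments. Unset Strict Implicit. Unset Printing Implicit Defensive.
Import Order.TTheory GRing.Theory Num.Theory.

(* Version-record bipartite graph: versions [V], records [Rc], and
   [E v r] = (v,r) is an edge, i.e. version v contains record r. *)

Section VersionGraph.
Variables (V Rc : finType) (E : V -> Rc -> bool).

Definition recs_of (v : V) : {set Rc} := [set r | E v r].
Definition all_recs : {set Rc} := \bigcup_(v : V) recs_of v.
Definition recs_of_set (A : {set V}) : {set Rc} := \bigcup_(v in A) recs_of v.
Definition weight (vi vj : V) : nat := #|recs_of vi :&: recs_of vj|.

(* Rooted version tree on V given by a root and a parent function:
   tree edges are (par v, v) for v != root (parent -> child). *)
Variables (root : V) (par : V -> V).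

Definition is_rooted_tree : Prop :=
  forall v : V, exists n : nat, iter n par v = root.

Definition tree_edge (u v : V) : bool := (v != root) && (par v == u).

Definition tree_adj : rel V := fun u v => tree_edge u v || tree_edge v u.

Definition connected_in_tree (S : {set V}) : Prop :=
  forall u v, u \in S -> v \in S ->
    connect [rel x y | [&& x \in S, y \in S & tree_adj x y]] u v.

Definition no_cross_version_diff : Prop :=
  forall r : Rc, connected_in_tree [set v | E v r].

Definition tree_adj_minus (vi vj : V) : rel V := fun x y =>
  tree_adj x y && ~~ (((x == vi) && (y == vj)) || ((x == vj) && (y == vi))).

Definition component_minus (vi vj a : V) : {set V} :=
  [set v | connect (tree_adj_minus vi vj) a v].

End VersionGraph.

(* Main.v *)
Require Import Defs.
From HB Require Import structures.
From mathcomp Require Import all_boot all_order all_algebra.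
Import Order.TTheory GRing.Theory Num.Theory.
Local Open Scope ring_scope.

Section Aux.
Local Open Scope nat_scope.
Variables (V : finType) (root : V) (par : V -> V).
Hypothesis htree : is_rooted_tree root par.

Let ex_d (u : V) : exists n, iter n par u == root.
Proof. by have [n hn] := htree u; exists n; apply/eqP. Qed.

Let d (u : V) := ex_minn (ex_d u).

Let d_par u : u != root -> d (par u) + 1 = d u.
Proof.
move=> hu; rewrite /d.
case: ex_minnP => m /eqP hm minm.
case: ex_minnP => n /eqP hn minn.
case: n hn minn => [|n] hn minn; first by rewrite /= in hn; rewrite hn eqxx in hu.
have h1 : m <= n by apply: minm; rewrite -iterSr hn.
have h2 : n.+1 <= m.+1 by apply: minn; rewrite iterSr hm.
by rewrite addn1; apply/eqP; rewrite eqn_leq ltnS h1; move: h2.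
Qed.

Lemma disjoint_comp vi vj : tree_edge root par vi vj ->
  ~~ connect (tree_adj_minus root par vi vj) vi vj.
Proof.
move=> /andP [hvj /eqP hpar].
pose D u := exists k, iter k par u = vj /\ d u = (k + d vj)%N.
have closedD : forall x y, tree_adj_minus root par vi vj x y -> D x -> D y.
  move=> x y /andP [/orP [/andP [hy /eqP hxy]|/andP [hx /eqP hyx]] hno] [k [hk hd]].
  - exists k.+1; split; first by rewrite iterSr hxy.
    by rewrite -(d_par y hy) hxy hd addn1 addSn.
  - case: k hk hd => [|k] hk hd.
      rewrite /= in hk; subst x.
      by rewrite -hyx -hpar !eqxx orbT in hno.
    exists k; split; first by rewrite -hyx -iterSr.
    have := d_par x hx; rewrite hyx hd => h.
    by apply/eqP; rewrite -(eqn_add2r 1) h addn1 addSn.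
have pathD : forall p x, path (tree_adj_minus root par vi vj) x p -> D x -> D (last x p).
  elim=> [|y p IH] x //= /andP [hxy hp] hx.
  by apply: IH => //; apply: closedD hxy hx.
have hsym : symmetric (tree_adj_minus root par vi vj).
  move=> x y; rewrite /tree_adj_minus /tree_adj.
  by case: (x == vi); case: (x == vj); case: (y == vi); case: (y == vj);
     case: (tree_edge root par x y); case: (tree_edge root par y x).
apply/negP; rewrite (sym_connect_sym hsym) => /connectP [p hp hl].
have hD : D vj by exists 0%N.
have := pathD p vj hp hD; rewrite -hl => [[k [hk hdk]]].
have := d_par vj hvj; rewrite hpar hdk => h.
have : d vj < k + d vj + 1 by rewrite addn1 ltnS leq_addl.
by rewrite h ltnn.
Qed.
End Aux.

Theorem lemma2 (F : realFieldType) (V Rc : finType) (E : V -> Rc -> bool)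
    (root : V) (par : V -> V) (delta : F) (vi vj : V) :
  is_rooted_tree root par ->
  no_cross_version_diff E root par ->
  0 < delta ->
  tree_edge root par vi vj ->
  (weight E vi vj)%:R <= delta * (#|all_recs E|)%:R ->
  let V1 := component_minus root par vi vj vi in
  let V2 := component_minus root par vi vj vj in
  (#|recs_of_set E V1| + #|recs_of_set E V2|)%:R
    <= (1 + delta) * (#|all_recs E|)%:R.
Proof.
move=> htree hnc hdelta hedge hw; cbv zeta.
set V1 := component_minus root par vi vj vi; set V2 := component_minus root par vi vj vj.
set e := tree_adj_minus root par vi vj.
have hsym : symmetric e.
  move=> x y; rewrite /e /tree_adj_minus /tree_adj.
  by case: (x == vi); case: (x == vj); case: (y == vi); case: (y == vj);
     case: (tree_edge root par x y); case: (tree_edge root par y x).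
have hdis := @disjoint_comp V root par htree vi vj hedge.
have key : recs_of_set E V1 :&: recs_of_set E V2 \subset recs_of E vi :&: recs_of E vj.
  apply/subsetP => r; rewrite inE => /andP [/bigcupP [a ha hra] /bigcupP [b hb hrb]].
  rewrite /V1 /V2 /component_minus !inE in ha hb hra hrb.
  have hab := hnc r a b.
  rewrite !inE in hab; move: (hab hra hrb) => /connectP [p hp hl].
  have gen : forall p x, path [rel x y | [&& x \in [set v | E v r], y \in [set v | E v r]
      & tree_adj root par x y]] x p -> connect e x (last x p) \/ (E vi r && E vj r).
    elim=> [|y q IH] x /=; first by left.
    move=> /andP [/and3P [hx hy hxy] hq].
    case: (IH y hq) => [hc|]; last by right.
    case hexy: (e x y).
      by left; apply: connect_trans hc; apply: connect1.
    right; move: hexy; rewrite /e /tree_adj_minus hxy /= => /negbFE.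
    rewrite !inE in hx hy.
    by case/orP => /andP [/eqP hx' /eqP hy']; subst; rewrite ?hx ?hy.
  case: (gen p a hp) => [hc|]; last by rewrite !inE.
  exfalso; move/negP: hdis; apply.
  have hvb : connect e vi b by rewrite hl; apply: connect_trans ha hc.
  apply: connect_trans hvb _.
  by rewrite (sym_connect_sym hsym).
have h1 : (#|recs_of_set E V1| + #|recs_of_set E V2| <= #|all_recs E| + weight E vi vj)%N.
  rewrite -cardsUI leq_add // subset_leq_card //.
  apply/subsetP => r /setUP [] /bigcupP [a _ h]; apply/bigcupP; by exists a.
apply: le_trans (_ : (#|all_recs E| + weight E vi vj)%:R <= _).
  by rewrite ler_nat.
by rewrite natrD mulrDl mul1r lerD2l.
Qed.
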